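(* Let $M$ be a $T_0$-algebra. The map $\theta:\mathrm{at}\,M\to\mathrm{pt}\,\mathcal O M$, $\theta(x)={\uparrow}x\cap\mathcal O M$, restricts and co-restricts to a homeomorphism $\theta':\mathrm{at}_D M\to\mathrm{pt}_D\mathcal O M$. In particular, for every locally closed atom $x$ of $M$, ${\uparrow}x\cap\mathcal O M$ is a slicing filter of $\mathcal O M$, and every slicing filter of $\mathcal O M$ is of this form for a unique locally closed atom $x$.
   Context: An MT-algebra is a pair $(M,\square)$ where $M$ is a complete boolean algebra and $\square:M\to M$ satisfies $\square 1=1$, $\square(a\wedge b)=\square a\wedge\square b$, $\square a\le a$, $\square a\le\square\square a$; $\Diamond a=\neg\square\neg a$; open: $\square a=a$; closed: $\Diamond a=a$; locally closed: $a=\square b\wedge\Diamond c$ for some $b,c$. $\mathcal O M$ is the frame of open elements. Saturated element: a meet of opens; weakly locally closed: $s\wedge c$ with $s$ saturated and $c$ closed; $M$ is a $T_0$-algebra if every element is a join of weakly locally closed elements. $\mathrm{at}\,M$ is the set of atoms of $M$ with topology $\{\eta_M(u):u\in\mathcal O M\}$ where $\eta_M(a)=\{x\in\mathrm{at}\,M:x\le a\}$; $\mathrm{at}_D M$ is the subspace of locally closed atoms. For a frame $L$, $\mathrm{pt}\,L$ is the space of completely prime filters with opens $\{P:a\in P\}$, $a\in L$. For elements $a<b$ of a poset, $a\lessdot b$ means there is no $x$ with $a<x<b$. A filter $F$ of $L$ is slicing if it is prime and there are $b\in F$, $a\notin F$ with $a\lessdot b$; $\mathrm{pt}_D L$ is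 the set of slicing filters (each is completely prime) with the subspace topology from $\mathrm{pt}\,L$, i.e. opens $\{F\in\mathrm{pt}_DL: a\in F\}$, $a\in L$. *)

(* Defs.v *)
From HB Require Import structures.
From mathcomp Require Import all_boot all_order.

Set Implicit Arguments.
Unset Strict Implicit.
Unset Printing Implicit Defensive.

Import Order.Theory.
Local Open Scope order_scope.

(* A boolean algebra is modelled by MathComp's ctbDistrLatticeType
   (complemented distributive lattice with top and bottom);
   completeness is an explicit hypothesis. *)
Section MT.
Context {d : Order.disp_t} {M : ctbDistrLatticeType d}.

Definition is_lub_in (P S : M -> Prop) (s : M) : Prop :=
  P s /\ (forall t, S t -> t <= s) /\
  (forall u, P u -> (forall t, S t -> t <= u) -> s <= u).
Definition is_glb_in (P S : M -> Prop) (s : M) : Prop :=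
  P s /\ (forall t, S t -> s <= t) /\
  (forall u, P u -> (forall t, S t -> u <= t) -> u <= s).

Definition allM : M -> Prop := fun _ => True.

Definition complete_BA : Prop :=
  (forall S : M -> Prop, exists s, is_lub_in allM S s) /\
  (forall S : M -> Prop, exists s, is_glb_in allM S s).

Definition is_MT_algebra (box : M -> M) : Prop :=
  [/\ complete_BA,
      box \top = \top,
      (forall a b, box (a `&` b) = box a `&` box b),
      (forall a, box a <= a) &
      (forall a, box a <= box (box a))].

Definition dia (box : M -> M) (a : M) : M := ~` (box (~` a)).
Definition is_open (box : M -> M) (a : M) : Prop := box a = a.
Definition is_closed (box : M -> M) (a : M) : Prop := dia box a = a.
Definition locally_closed (box : M -> M) (a : M) : Prop :=
  exists b c, a = box b `&` dia box c.
Definition saturated (box : M -> M) (s : M) : Prop :=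
  exists S : M -> Prop, (forall t, S t -> is_open box t) /\ is_glb_in allM S s.
Definition weakly_locally_closed (box : M -> M) (a : M) : Prop :=
  exists s c, [/\ saturated box s, is_closed box c & a = s `&` c].
Definition T0_algebra (box : M -> M) : Prop :=
  forall a, exists S : M -> Prop,
    (forall y, S y -> weakly_locally_closed box y) /\ is_lub_in allM S a.

Definition atom (x : M) : Prop :=
  x != \bot /\ (forall y, y <= x -> y = \bot \/ y = x).
Definition atom_D (box : M -> M) (x : M) : Prop := atom x /\ locally_closed box x.

Definition eta (a : M) : M -> Prop := fun x => atom x /\ x <= a.

Definition at_open (box : M -> M) (U : M -> Prop) : Prop :=
  exists u, is_open box u /\ forall x, U x <-> eta u x.

(* ---- the frame O M: filters are represented as predicates on M
   contained in the set of open elements ---- *)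
Definition filter_O (box : M -> M) (F : M -> Prop) : Prop :=
  [/\ (forall a, F a -> is_open box a),
      F \top,
      (forall a b, F a -> is_open box b -> a <= b -> F b) &
      (forall a b, F a -> F b -> F (a `&` b))].

(* completely prime filter of O M (joins taken in the frame O M) *)
Definition cp_filter (box : M -> M) (F : M -> Prop) : Prop :=
  filter_O box F /\
  (forall (S : M -> Prop) s, (forall t, S t -> is_open box t) ->
     is_lub_in (is_open box) S s -> F s -> exists t, S t /\ F t).

Definition prime_filter_O (box : M -> M) (F : M -> Prop) : Prop :=
  [/\ filter_O box F, ~ F \bot &
      (forall a b s, is_open box a -> is_open box b ->
         is_lub_in (is_open box) (fun t => t = a \/ t = b) s ->
         F s -> F a \/ F b)].

Definition covered_O (box : M -> M) (a b : M) : Prop :=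
  [/\ is_open box a, is_open box b, a < b &
      (forall x, is_open box x -> ~ (a < x /\ x < b))].

Definition slicing (box : M -> M) (F : M -> Prop) : Prop :=
  prime_filter_O box F /\
  exists a b, [/\ F b, is_open box a, ~ F a & covered_O box a b].

Definition pt_open (box : M -> M) (W : (M -> Prop) -> Prop) : Prop :=
  exists a, is_open box a /\ forall P, W P <-> (cp_filter box P /\ P a).

Definition theta (box : M -> M) (x : M) : M -> Prop :=
  fun a => is_open box a /\ x <= a.

End MT.

Definition subspace_open {X : Type} (op : (X -> Prop) -> Prop) (A : X -> Prop)
  (U : X -> Prop) : Prop :=
  exists V, op V /\ forall x, U x <-> (V x /\ A x).

Definition homeomorphism_between {X Y : Type}
  (opA : (X -> Prop) -> Prop) (A : X -> Prop)
  (opB : (Y -> Prop) -> Prop) (B : Y -> Prop) (f : X -> Y) : Prop :=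
  [/\ (forall x, A x -> B (f x)),
      (forall x y, A x -> A y -> f x = f y -> x = y),
      (forall y, B y -> exists x, A x /\ f x = y),
      (forall W, opB W -> opA (fun x => A x /\ W (f x))) &
      (forall U, opA U -> (forall x, U x -> A x) ->
         opB (fun y => exists x, U x /\ f x = y))].

(* Main.v *)
Require Import Defs.
From HB Require Import structures.
From mathcomp Require Import all_boot all_order.
From Stdlib Require Import Classical FunctionalExtensionality PropExtensionality.
Import Order.Theory.
Local Open Scope order_scope.

Section Helpers.
Context {d : Order.disp_t} {M : ctbDistrLatticeType d}.
Implicit Types (box : M -> M) (a b c x y u : M).

Lemma box_mono {box} : is_MT_algebra box -> forall a b, a <= b -> box a <= box b.
Proof. case=> _ _ bI _ _ a b /meet_idPl <-; rewrite bI; exact: leIr. Qed.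

Lemma box_open {box} a : is_MT_algebra box -> is_open box (box a).
Proof. move=> MT; case: (MT) => _ _ _ bd b4; apply/le_anti; rewrite bd b4. done. Qed.

Lemma join_open {box} a b : is_MT_algebra box -> is_open box a -> is_open box b ->
  is_open box (a `|` b).
Proof.
move=> MT ha hb; case: (MT) => _ _ _ bd _; apply/le_anti; rewrite bd /= leUx.
rewrite -{1}ha -{2}hb !(box_mono MT) //; [exact: lexUr | exact: lexUl].
Qed.

Lemma meet_open {box} a b : is_MT_algebra box -> is_open box a -> is_open box b ->
  is_open box (a `&` b).
Proof. move=> [_ _ bI _ _] ha hb; by rewrite /is_open bI ha hb. Qed.

Lemma compl_closed box k : is_closed box k -> is_open box (~` k).
Proof. rewrite /is_closed /dia /is_open => Hk; by rewrite -{2}Hk complK. Qed.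

Lemma dia_compl_open box a : is_open box a -> dia box (~` a) = ~` a.
Proof. by rewrite /is_open /dia complK => ->. Qed.

Lemma lub_open {box} (S : M -> Prop) j : is_MT_algebra box ->
  (forall t, S t -> is_open box t) -> is_lub_in allM S j -> is_open box j.
Proof.
move=> MT hS [_ [ub lst]]; case: (MT) => _ _ _ bd _; apply/le_anti; rewrite bd /=.
apply: lst => // t St; rewrite -(hS t St); apply: box_mono => //; exact: ub.
Qed.

Lemma atom_split x t : atom x -> x <= t \/ x `&` t = \bot.
Proof.
case=> _ H; case: (H (x `&` t) (leIl _ _)) => e; [right|left] => //.
exact/meet_idPl.
Qed.

Lemma disj_compl x t : x `&` t = \bot -> t <= ~` x.
Proof. by move=> e; rewrite -disj_leC meetC e. Qed.

Lemma theta_filter box x : is_MT_algebra box -> atom x ->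
  filter_O box (theta box x).
Proof.
move=> MT ax; case: (MT) => _ btop _ _ _; split.
- by move=> a [].
- by split; [exact: btop | exact: lex1].
- move=> a b [_ xa] ob ab; split => //; exact: le_trans ab.
- move=> a b [oa xa] [ob xb]; split; first exact: meet_open.
  by rewrite lexI xa xb.
Qed.

Lemma theta_cp box x : is_MT_algebra box -> atom x -> cp_filter box (theta box x).
Proof.
move=> MT ax; split; first exact: theta_filter.
move=> S s hS [os [ubs lss]] [_ xs].
apply: NNPP => Hn.
case: (MT) => [[cl _] _ _ _ _]; case: (cl S) => j hj.
have oj := lub_open _ _ MT hS hj.
case: hj => [_ [ubj lsj]].
have sj : s <= j by apply: lss => //.
have jx : j <= ~` x.
  apply: lsj => // t St; apply: disj_compl.
  case: (atom_split x t ax) => [xt|//]; exfalso; apply: Hn; exists t; split => //.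
  by split => //; apply: hS.
have : x <= x `&` ~` x by rewrite lexI lexx (le_trans xs (le_trans sj jx)).
rewrite meetxC lex0 => /eqP ex; by case: ax; rewrite ex eqxx.
Qed.

Lemma theta_prime box x : is_MT_algebra box -> atom x ->
  prime_filter_O box (theta box x).
Proof.
move=> MT ax; split; first exact: theta_filter.
- move=> [_]; rewrite lex0; by case: ax => /negbTE ->.
- move=> a b s oa ob [os [ubs lss]] [_ xs].
  have sab : s <= a `|` b.
    apply: lss; first exact: join_open.
    move=> t [->|->]; [exact: lexUl | exact: lexUr].
  have xab := le_trans xs sab.
  case: (atom_split x a ax) => [xa|ea]; first by left.
  case: (atom_split x b ax) => [xb|eb]; first by right.
  exfalso; case: ax => /eqP nx _; apply: nx.
  by rewrite -(meet_idPl xab) meetUr ea eb joinx0.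
Qed.

Lemma theta_slicing box x : is_MT_algebra box -> atom_D box x ->
  slicing box (theta box x).
Proof.
move=> MT [ax [p [q ex]]]; split; first exact: theta_prime.
set b := box p.
have ob : is_open box b by exact: box_open.
have xb : x <= b by rewrite ex leIl.
have ob' : is_open box (~` dia box q) by rewrite /dia complK; exact: box_open.
set a := b `&` ~` dia box q.
have oa : is_open box a by exact: meet_open.
have ax' : a = b `&` ~` x.
  by rewrite ex complI meetUr meetxC join0x.
have nx : x != \bot by case: ax.
exists a, b; split => //.
- move=> [_ xa]; move: nx; rewrite ax' in xa.
  have : x <= x `&` ~` x by rewrite lexI lexx (le_trans xa (leIr _ _)).
  by rewrite meetxC lex0 => ->.
- have ab : a <= b by exact: leIl.
  have ba : a `|` x = b.
    by rewrite ax' joinIl [~` x `|` x]joinC joinxC meetx1; apply/join_idPl.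
  split => //.
  + rewrite lt_def ab andbT; apply/eqP => e; move: nx.
    have : x <= x `&` ~` x by rewrite lexI lexx (le_trans xb) // e ax' leIr.
    by rewrite meetxC lex0 => ->.
  + move=> w ow [aw wb].
    case: (atom_split x w ax) => [xw|ew].
    * have : b <= w by rewrite -ba leUx xw (ltW aw).
      by rewrite (lt_geF wb).
    * have : w <= a by rewrite ax' lexI (ltW wb) disj_compl.
      by rewrite (lt_geF aw).
Qed.

Lemma slicing_point box F : is_MT_algebra box -> T0_algebra box -> slicing box F ->
  exists x, atom_D box x /\ forall u, is_open box u -> (F u <-> x <= u).
Proof.
move=> MT T0 [[[Fo Ftop Fup FI] nFbot Fpr] [a [b [Fb oa nFa [_ ob ltab cov]]]]].
set c := b `&` ~` a.
have key : forall u, is_open box u -> (F u -> c <= u) /\ (~ F u -> c `&` u = \bot).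
  move=> u ou; set w := a `|` (b `&` u).
  have obu : is_open box (b `&` u) by exact: meet_open.
  have ow : is_open box w by exact: join_open.
  have aw : a <= w by exact: lexUl.
  have wb : w <= b by rewrite leUx (ltW ltab) leIl.
  have wab : w = a \/ w = b.
    case: (eqVneq w a) => [->|nwa]; first by left.
    case: (eqVneq w b) => [->|nwb]; first by right.
    exfalso; apply: (cov w ow); split.
    - by rewrite lt_def nwa aw.
    - by rewrite lt_def eq_sym nwb wb.
  split.
  - move=> Fu; have Fw : F w.
      by apply: (Fup (b `&` u)) => //; [exact: FI | exact: lexUr].
    case: wab => [ewa|ewb]; first by move: Fw; rewrite ewa.
    have E : c = (b `&` u) `&` ~` a by rewrite /c -{1}ewb /w meetUl meetxC join0x.
    rewrite E; apply: leIxl; exact: leIr.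
  - move=> nFu; case: wab => [ewa|ewb]; last first.
      exfalso; have Fw : F w by rewrite ewb.
      have lubw : is_lub_in (is_open box) (fun t => t = a \/ t = b `&` u) w.
        split => //; split.
        + by move=> t [->|->]; [exact: lexUl | exact: lexUr].
        + move=> v _ hv; rewrite leUx (hv a (or_introl erefl)).
          by rewrite (hv _ (or_intror erefl)).
      case: (Fpr a (b `&` u) w oa obu lubw Fw) => // Fbu.
      by apply: nFu; apply: (Fup (b `&` u)) => //; exact: leIr.
    have bua : b `&` u <= a by apply/join_idPl.
    apply/eqP; rewrite -lex0 /c meetAC.
    by apply: le_trans (leI2 bua (lexx _)) _; rewrite meetxC.
have nc : c != \bot.
  apply/negP => /eqP ec.
  have : b <= ~` ~` a by rewrite -disj_leC -/c ec.
  by rewrite complK (lt_geF ltab).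
have Fc : forall u, is_open box u -> (F u <-> c <= u).
  move=> u ou; split; first by case: (key u ou).
  move=> cu; apply: NNPP => nFu; case: (key u ou) => _ /(_ nFu) e.
  by move: nc; rewrite -(meet_idPl cu) e eqxx.
have dich : forall t, is_open box t -> c <= t \/ c `&` t = \bot.
  move=> t ot; case: (classic (F t)) => Ft; [left|right]; by case: (key t ot) => [H1 H2]; auto.
have wlc_eq : forall y, weakly_locally_closed box y -> y <= c -> y != \bot -> y = c.
  move=> y [s [k [[S' [hS' [_ [lbs gls]]]] ck ey]]] yc ny.
  apply/le_anti; rewrite yc /= ey lexI; apply/andP; split.
  - apply: gls => // t St; case: (dich t (hS' t St)) => // e.
    have : y <= c `&` t by rewrite lexI yc (le_trans _ (lbs t St)) // ey leIl.
    by rewrite e lex0 (negbTE ny).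
  - case: (dich (~` k) (compl_closed _ _ ck)) => [cnk|e].
    + have : y <= k `&` ~` k by rewrite lexI (le_trans yc cnk) ey leIr.
      by rewrite meetxC lex0 (negbTE ny).
    + by rewrite -[k]complK -disj_leC e.
have atc : atom c.
  split=> // z zc; case: (eqVneq z \bot) => [->|nz]; [by left|right].
  case: (T0 z) => S [hS [_ [ubz lsz]]].
  case: (classic (exists y, S y /\ y != \bot)) => [[y [Sy ny]]|Hn].
  - have yc : y <= c := le_trans (ubz y Sy) zc.
    have eyc := wlc_eq y (hS y Sy) yc ny.
    by apply/le_anti; rewrite zc -{1}eyc ubz.
  - exfalso; move: nz; apply/negP; rewrite negbK -lex0; apply: lsz => // t St.
    case: (eqVneq t \bot) => [->//|nt]; exfalso; apply: Hn; by exists t.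
exists c; split => //; split => //; exists b, (~` a).
by rewrite ob (dia_compl_open _ _ oa).
Qed.

Lemma atom_D_unique box x y : is_MT_algebra box -> atom_D box x -> atom y ->
  (forall u, is_open box u -> (x <= u <-> y <= u)) -> y = x.
Proof.
move=> MT [ax [p [q ex]]] ay H.
have yp : y <= box p by apply/H; [exact: box_open | rewrite ex leIl].
have yq : y <= dia box q.
  case: (atom_split y (dia box q) ay) => // e.
  have : y <= ~` dia box q by rewrite -disj_leC e.
  have o : is_open box (~` dia box q) by rewrite /dia complK; exact: box_open.
  move/(H _ o) => xn; exfalso; case: ax => /eqP nx _; apply: nx; apply/eqP.
  by rewrite -lex0 -(meetxC (dia box q)) lexI xn andbT ex leIr.
have yx : y <= x by rewrite ex lexI yp yq.
case: ax => _ /(_ y yx) [ey|//]; by case: ay; rewrite ey eqxx.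
Qed.

End Helpers.

Theorem theorem5p5 (d : Order.disp_t) (M : ctbDistrLatticeType d) (box : M -> M) :
  is_MT_algebra box -> T0_algebra box ->
  homeomorphism_between
    (subspace_open (at_open box) (atom_D box)) (atom_D box)
    (subspace_open (pt_open box) (slicing box)) (slicing box)
    (theta box)
  /\ (forall x : M, atom_D box x -> slicing box (theta box x))
  /\ (forall F : M -> Prop, slicing box F ->
        exists x : M, [/\ atom_D box x, theta box x = F &
          forall y : M, atom_D box y -> theta box y = F -> y = x]).
Proof.
move=> MT T0.
have P2 : forall x : M, atom_D box x -> slicing box (theta box x).
  by move=> x Ax; exact: theta_slicing.
have thE : forall x F, (forall u, is_open box u -> (F u <-> x <= u)) ->
    (forall u, F u -> is_open box u) -> theta box x = F.
  move=> x F H Fo; apply: functional_extensionality => u.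
  apply: propositional_extensionality; split.
  - by move=> [ou xu]; apply/H.
  - by move=> Fu; have ou := Fo u Fu; split => //; apply/H.
have uniq : forall x y, atom_D box x -> atom_D box y -> theta box y = theta box x -> y = x.
  move=> x y Ax [ay _] e; apply: (@atom_D_unique _ _ box x y MT Ax ay) => u ou.
  have := f_equal (fun P => P u) e => /= e'.
  split => xu.
  - have : theta box x u by [].
    by rewrite -e' => -[].
  - have : theta box y u by [].
    by rewrite e' => -[].
have P3 : forall F : M -> Prop, slicing box F ->
    exists x : M, [/\ atom_D box x, theta box x = F &
      forall y : M, atom_D box y -> theta box y = F -> y = x].
  move=> F sF; case: (slicing_point _ _ MT T0 sF) => x [Ax H].
  have Fo : forall u, F u -> is_open box u.
    by case: sF => [[[Fo _ _ _] _ _] _].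
  have ex := thE x F H Fo.
  exists x; split => // y Ay ey; apply: uniq => //; by rewrite ey ex.
split; last by split.
split.
- exact: P2.
- by move=> x y Ax Ay e; symmetry; apply: uniq.
- by move=> F sF; case: (P3 F sF) => x [Ax ex _]; exists x.
- move=> W [V [[a [oa HV]] HW]].
  exists (@Defs.eta d M a); split; first by exists a; split.
  move=> x; split.
  + move=> [Ax Wx]; case/HW: Wx => /HV [_ [_ xa]] _; split => //; split => //.
    by case: Ax.
  + move=> [[atx xa] Ax]; split => //; apply/HW; split; last exact: P2.
    by apply/HV; split; [exact: theta_cp | split].
- move=> U [V' [[u [ou HV']] HU]] _.
  exists (fun P => cp_filter box P /\ P u); split; first by exists u; split.
  move=> P; split.
  + move=> [x [Ux <-]]; case/HU: Ux => /HV' [atx xu] Ax.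
    by split; [split; [exact: theta_cp | split] | exact: P2].
  + move=> [[_ Pu] sP]; case: (P3 P sP) => x [Ax ex _].
    exists x; split => //; apply/HU; split => //; apply/HV'.
    split; first by case: Ax.
    by move: Pu; rewrite -ex => -[].
Qed.
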